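(* Consider the procurement setting below with an XOS valuation $v$. The randomized mechanism XOS-Main (described below) is budget feasible and (universally) truthful, and there is an absolute constant $C$ such that for every cost vector $c$ (with $c(i)\le B$ for all $i$), $v(\mathrm{OPT}(c))\le C\cdot \mathbb{E}[\text{value of the winning set of XOS-Main on } c]$, where agents bid truthfully. XOS-Main: with probability $\frac12$ run XOS-Random-Sample; with probability $\frac12$ pick an item $i\in\arg\max_{i\in A}v(\{i\})$ as the only winner and pay it $B$. XOS-Random-Sample (on bids $b$): (1) put each item independently with probability $\frac12$ into a set $T$; (2) compute an optimal solution $\mathrm{OPT}(T)$, i.e. a set maximizing $v(S)$ over $S\subseteq T$ with $b(S)\le B$; (3) set $t=\frac{v(\mathrm{OPT}(T))}{8B}$; (4) find $S^*\in\arg\max_{S\subseteq A\setminus T}\{v(S)-t\cdot b(S)\}$, ties broken by a fixed order; (5) find an additive function $f$ in the XOS representation of $v$ with $f(S^* )=v(S^* )$; (6) run AddM for the additive valuation $f$ on item set $S^*$ with budget $B$; (7) output the result of AddM. Winners are paid their threshold payments.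
   Context: Setting: a buyer with budget $B>0$ and a set $A$ of $n$ agents (items); agent $i$ has a private cost $c(i)\ge 0$ (assumed $\le B$). The valuation $v:2^A\to\mathbb{R}_{\ge0}$ is public, monotone, with $v(\emptyset)=0$; it is XOS: $v(S)=\max\{f_1(S),\dots,f_m(S)\}$ for nonnegative additive functions $f_j$ ($f_j(S)=\sum_{i\in S}f_j(i)$). $\mathrm{OPT}(c)$ is a set maximizing $v(S)$ subject to $c(S)=\sum_{i\in S}c(i)\le B$. A mechanism receives bids $b(i)$, selects winners $S$ and payments $p(i)$, with $p(i)=0$ for $i\notin S$ and $p(i)\ge b(i)$ for $i\in S$; an agent's utility is $p(i)-c(i)$ if it wins and $0$ otherwise. A deterministic mechanism is truthful if bidding $b(i)=c(i)$ is a dominant strategy for every agent; a randomized mechanism is (universally) truthful if it is a probability distribution over deterministic truthful mechanisms. It is budget feasible if $\sum_i p(i)\le B$ always. The threshold payment of a winner under a monotone allocation rule is the supremum of bids with which it would still win. AddM denotes a fixed universally truthful, budget feasible mechanism for additive valuations (from prior work) whose approximation ratio is at most $3$. *)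

(* Defs.v *)
From HB Require Import structures.
From mathcomp Require Import all_boot all_order all_algebra.
From mathcomp Require Import classical_sets reals.
Set Implicit Arguments. Unset Strict Implicit. Unset Printing Implicit Defensive.
Import Order.TTheory GRing.Theory Num.Theory.
Local Open Scope ring_scope.
Local Open Scope classical_set_scope.

Section Procurement.
Variables (R : realType) (n : nat).
Local Notation agent := 'I_n.
Local Notation bids := (agent -> R).

Definition mech := bids -> {set agent} * (agent -> R).

Definition setb (b : bids) (i : agent) (x : R) : bids :=
  fun j => if j == i then x else b j.

(* admissible bids: every bid lies in [0, B] (costs, hence bids, are <= B) *)
Definition valid_bids (B : R) (b : bids) := forall i, 0 <= b i <= B.

Definition cost (b : bids) (S : {set agent}) := \sum_(i in S) b i.

Definition utility (o : {set agent} * (agent -> R)) (i : agent) (ci : R) :=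
  if i \in o.1 then o.2 i - ci else 0.

Definition valid_outcomes (B : R) (M : mech) :=
  forall b, valid_bids B b -> forall i,
    (i \notin (M b).1 -> (M b).2 i = 0) /\ (i \in (M b).1 -> b i <= (M b).2 i).

Definition truthful (B : R) (M : mech) :=
  forall (b : bids) (i : agent) (ci : R), valid_bids B b -> 0 <= ci <= B ->
    utility (M b) i ci <= utility (M (setb b i ci)) i ci.

Definition budget_feasible (B : R) (M : mech) :=
  forall b, valid_bids B b -> \sum_(i < n) (M b).2 i <= B.

Definition is_distr (Om : finType) (w : Om -> R) :=
  (forall o, 0 <= w o) /\ \sum_(o : Om) w o = 1.

(* a randomized mechanism (Om, w, M) is universally truthful / budget feasible
   if every deterministic mechanism in its support is *)
Definition univ_truthful (Om : finType) (B : R) (w : Om -> R) (M : Om -> mech) :=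
  is_distr w /\ forall o, 0 < w o -> valid_outcomes B (M o) /\ truthful B (M o).

Definition univ_budget_feasible (Om : finType) (B : R) (w : Om -> R)
  (M : Om -> mech) := forall o, 0 < w o -> budget_feasible B (M o).

Definition expected_value (Om : finType) (w : Om -> R) (M : Om -> mech)
  (val : {set agent} -> R) (c : bids) := \sum_(o : Om) w o * val (M o c).1.

Definition xos_rep (v : {set agent} -> R) (m : nat) (fs : 'I_m -> agent -> R) :=
  (forall j i, 0 <= fs j i) /\
  forall S, v S = \big[Num.max/0]_(j < m) \sum_(i in S) fs j i.

Definition opt_val (v : {set agent} -> R) (U : {set agent}) (b : bids) (B : R) :=
  \big[Num.max/0]_(S : {set agent} | (S \subset U) && (cost b S <= B)) v S.

Definition threshold (B : R) (W : bids -> {set agent}) (b : bids) (i : agent) : R :=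
  sup [set x : R | 0 <= x <= B /\ i \in W (setb b i x)].

Definition restrict (S : {set agent}) (b : bids) : bids :=
  fun i => if i \in S then b i else 0.

(* AddM: seed -> item set -> additive valuation -> budget -> bids -> outcome *)
Definition addm_type (Om : finType) :=
  Om -> {set agent} -> (agent -> R) -> R -> mech.

Definition AddM_spec (Om : finType) (w : Om -> R) (AddM : addm_type Om) :=
  is_distr w /\
  forall (S : {set agent}) (f : agent -> R) (B' : R), 0 < B' ->
    (forall i, 0 <= f i) ->
    [/\ (forall o, 0 < w o -> forall b, valid_bids B' b -> (AddM o S f B' b).1 \subset S),
        univ_truthful B' w (fun o => AddM o S f B'),
        univ_budget_feasible B' w (fun o => AddM o S f B') &
        (forall c : bids, (forall i, 0 <= c i <= B') ->
           opt_val (fun T => \sum_(i in T) f i) S c B'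
             <= 3 * expected_value w (fun o => AddM o S f B')
                                     (fun T => \sum_(i in T) f i) c)].

Section RandomSample.
Variables (Om : finType) (AddM : addm_type Om).
Variables (v : {set agent} -> R) (m : nat) (fs : 'I_m -> agent -> R) (B : R).

Definition rs_t (T : {set agent}) (b : bids) : R := opt_val v T b B / (8 * B).

(* S_star : argmax over S subset of A \ T of v(S) - t b(S), ties broken by the
   fixed enumeration order of {set agent} *)
Definition rs_Sstar (T : {set agent}) (b : bids) : {set agent} :=
  Order.arg_max finset.set0 (fun S => S \subset ~: T) (fun S => v S - rs_t T b * cost b S).

Definition rs_f (S : {set agent}) : agent -> R :=
  oapp fs (fun _ => 0) [pick j | \sum_(i in S) fs j i == v S].

Definition rs_winners (T : {set agent}) (o : Om) (b : bids) : {set agent} :=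
  let S := rs_Sstar T b in (AddM o S (rs_f S) B (restrict S b)).1.

Definition xos_random_sample (T : {set agent}) (o : Om) : mech :=
  fun b => (rs_winners T o b,
            fun i => if i \in rs_winners T o b
                     then threshold B (rs_winners T o) b i else 0).

Definition max_item_set : {set agent} :=
  oapp (fun i => finset.set1 i) finset.set0 [pick i | [forall j, v (finset.set1 j) <= v (finset.set1 i)]].

Definition max_item_mech : mech :=
  fun _ => (max_item_set, fun i => if i \in max_item_set then B else 0).

(* ---------- XOS-Main: seed = (coin, (T, o)) ---------- *)
Definition main_weight (w : Om -> R) (s : bool * ({set agent} * Om)) : R :=
  2^-1 * ((2 ^+ n)^-1 * w s.2.2).

Definition xos_main (s : bool * ({set agent} * Om)) : mech :=
  if s.1 then xos_random_sample s.2.1 s.2.2 else max_item_mech.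

End RandomSample.
End Procurement.

(* Main.v *)
Require Import Defs.
From HB Require Import structures.
From mathcomp Require Import all_boot all_order all_algebra.
From mathcomp Require Import boolp reals.
From mathcomp Require classical_sets.
From mathcomp Require Import ring lra.
Import Order.TTheory GRing.Theory Num.Theory.
Local Open Scope ring_scope.

Section Basic.
Variables (R : realType) (n : nat).
Local Notation agent := 'I_n.
Local Notation bids := (agent -> R).

Lemma setbK (b : bids) i x y : setb (setb b i x) i y = setb b i y.
Proof. by apply: funext => j; rewrite /setb; case: (j == i). Qed.

Lemma setb_id (b : bids) i : setb b i (b i) = b.
Proof. by apply: funext => j; rewrite /setb; case: eqP => // ->. Qed.

Lemma setb_same (b : bids) i x : setb b i x i = x.
Proof. by rewrite /setb eqxx. Qed.

Lemma cost_setb (b : bids) i x (S : {set agent}) :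
  cost (setb b i x) S = cost b S + (if i \in S then x - b i else 0).
Proof.
rewrite /cost; case: ifP => iS.
  rewrite !(big_setD1 i iS) /= setb_same.
  rewrite (eq_bigr b); first by lra.
  by move=> j; rewrite !inE /setb => /andP[/negbTE -> _].
rewrite addr0; apply: eq_bigr => j jS; rewrite /setb; case: eqP => // ji.
by rewrite -ji jS in iS.
Qed.

Lemma cost_ge0 (b : bids) S : (forall i, 0 <= b i) -> 0 <= cost b S.
Proof. by move=> h; apply: sumr_ge0 => i _. Qed.

Lemma cost_sub (b : bids) (S U : {set agent}) : (forall i, 0 <= b i) -> S \subset U ->
  cost b S <= cost b U.
Proof.
move=> h sSU; rewrite /cost [X in _ <= X](big_setID S) /= (finset.setIidPr sSU).
by rewrite lerDl; apply: sumr_ge0.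
Qed.

Lemma cost_split (b : bids) (S G : {set agent}) : G \subset S ->
  cost b S = cost b G + cost b (S :\: G).
Proof. by move=> sGS; rewrite /cost (big_setID G) /= (finset.setIidPr sGS). Qed.

Lemma sum_split (f : agent -> R) (S G : {set agent}) : G \subset S ->
  \sum_(i in S) f i = \sum_(i in G) f i + \sum_(i in S :\: G) f i.
Proof. by move=> sGS; rewrite (big_setID G) /= (finset.setIidPr sGS). Qed.

Variables (v : {set agent} -> R) (m : nat) (fs : 'I_m -> agent -> R).
Hypothesis hv : xos_rep v fs.

Lemma v_ge0 (S : {set agent}) : 0 <= v S.
Proof. by case: hv => _ ->; apply: bigmax_ge_id. Qed.

Lemma v_ge_f j (S : {set agent}) : \sum_(i in S) fs j i <= v S.
Proof. by case: hv => _ ->; apply: le_bigmax. Qed.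

Lemma v_cases (S : {set agent}) : v S = 0 \/ exists j, v S = \sum_(i in S) fs j i.
Proof.
case: hv => _ ->; apply: (big_ind (fun x => x = 0 \/ exists j, x = \sum_(i in S) fs j i)).
- by left.
- move=> x y hx hy; rewrite /Num.max; case: ifP => _; [exact hy|exact hx].
- by move=> j _; right; exists j.
Qed.

Lemma opt_val_ge0 (U : {set agent}) (b : bids) (B : R) : 0 <= opt_val v U b B.
Proof. exact: bigmax_ge_id. Qed.

Lemma opt_val_ge (U : {set agent}) (b : bids) (B : R) (S : {set agent}) : S \subset U -> cost b S <= B -> v S <= opt_val v U b B.
Proof. by move=> h1 h2; apply: le_bigmax_cond; rewrite h1 h2. Qed.

Lemma opt_val_le (U : {set agent}) (b : bids) (B : R) (x : R) : 0 <= x ->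
  (forall S : {set agent}, S \subset U -> cost b S <= B -> v S <= x) -> opt_val v U b B <= x.
Proof. by move=> h0 h; apply: bigmax_le => // S /andP[]; apply: h. Qed.

Lemma opt_val_cases (U : {set agent}) (b : bids) (B : R) : opt_val v U b B = 0 \/
  exists S : {set agent}, [/\ S \subset U, cost b S <= B & opt_val v U b B = v S].
Proof.
apply: (big_ind (fun x => x = 0 \/ exists S : {set agent}, [/\ S \subset U, cost b S <= B & x = v S])).
- by left.
- move=> x y hx hy; rewrite /Num.max; case: ifP => _; [exact hy|exact hx].
- by move=> S /andP[h1 h2]; right; exists S.
Qed.


Lemma rs_f_ge0 S i : 0 <= rs_f v fs S i.
Proof. by rewrite /rs_f; case: pickP => [j _|_] //=; case: hv. Qed.

Lemma rs_f_tight (S : {set agent}) : \sum_(i in S) rs_f v fs S i = v S.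
Proof.
rewrite /rs_f; case: pickP => [j /eqP //|/= h].
rewrite big1 //; case: (v_cases S) => [-> //|[j hj]].
by move: (h j); rewrite hj eqxx.
Qed.

Lemma rs_f_le (S U : {set agent}) : \sum_(i in U) rs_f v fs S i <= v U.
Proof.
rewrite /rs_f; case: pickP => [j _|_] /=; first exact: v_ge_f.
by rewrite big1 // v_ge0.
Qed.

End Basic.

Lemma pick_sub (T : finType) (p q : pred T) x :
  pick p = Some x -> (forall y, q y -> p y) -> q x -> pick q = Some x.
Proof.
rewrite /pick /enum_mem => + qp qx; elim: (Finite.enum T) => //= a l IH.
rewrite /= /in_mem /=.
case pa: (p a) => /=.
  by case=> ax; rewrite -ax in qx *; rewrite qx.
by move/IH; case qa: (q a) => //; move: (qp _ qa); rewrite pa.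
Qed.

Lemma argmax_props (R : realType) (I : finType) (i0 : I) (P : pred I) (F : I -> R) :
  P i0 -> P (Order.arg_max i0 P F) /\
  forall j, P j -> F j <= F (Order.arg_max i0 P F).
Proof. by move=> Pi0; case: (@Order.TotalTheory.arg_maxP _ _ I i0 P F Pi0). Qed.

Lemma argmax_pick (R : realType) (I : finType) (i0 : I) (P : pred I) (F : I -> R) :
  P i0 -> pick [pred i | P i & [forall (j | P j), (F j <= F i)%O]] = Some (Order.arg_max i0 P F).
Proof.
move=> Pi0; have [h1 h2] := @argmax_props _ _ _ _ F Pi0.
move: h1 h2; rewrite /Order.arg_max /extremum; case: pickP => [y _ //|h] /= h1 h2.
move: (h i0); rewrite /= h1 /=; move/negbT/negP; case.
by apply/forallP => j; apply/implyP => /h2.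
Qed.

Lemma argmax_stable (R : realType) (I : finType) (i0 : I) (P : pred I)
   (F G : I -> R) (Q : pred I) (d : R) :
  P i0 -> 0 <= d -> (forall S, G S = F S + (if Q S then d else 0)) ->
  Q (Order.arg_max i0 P F) -> Order.arg_max i0 P G = Order.arg_max i0 P F.
Proof.
move=> Pi0 d0 hG Qx.
have [Px xmax] := @argmax_props _ _ _ _ F Pi0.
set x := Order.arg_max i0 P F in Qx Px xmax *.
have hpF := @argmax_pick _ _ _ _ F Pi0.
have hpG : pick [pred i | P i & [forall (j | P j), (G j <= G i)%O]] = Some x.
  apply: (@pick_sub _ _ _ _ hpF).
    move=> y /andP[Py /forallP yG]; rewrite /= Py /=; apply/forallP => z.
    apply/implyP => Pz; have := implyP (yG z) Pz; have := implyP (yG x) Px.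
    rewrite !hG Qx; have := xmax z Pz.
    case: (Q y); case: (Q z) => /=; lra.
  rewrite /= Px /=; apply/forallP => z; apply/implyP => Pz.
  rewrite !hG Qx; have := xmax z Pz; case: (Q z) => /=; lra.
by rewrite /Order.arg_max /extremum hpG.
Qed.

Section Sstar.
Variables (R : realType) (n : nat).
Local Notation agent := 'I_n.
Local Notation bids := (agent -> R).
Variables (v : {set agent} -> R) (B : R).
Hypothesis B0 : 0 < B.

Lemma Sstar_props (T : {set agent}) (b : bids) :
  rs_Sstar v B T b \subset ~: T /\
  forall S : {set agent}, S \subset ~: T ->
    v S - rs_t v B T b * cost b S <= v (rs_Sstar v B T b) - rs_t v B T b * cost b (rs_Sstar v B T b).
Proof. by apply: argmax_props; rewrite finset.sub0set. Qed.

Lemma rs_t_ge0 (T : {set agent}) (b : bids) : 0 <= rs_t v B T b.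
Proof.
rewrite /rs_t; apply: divr_ge0; first exact: bigmax_ge_id.
by rewrite mulr_ge0 // ltW.
Qed.

Lemma rs_t_setb (T : {set agent}) (b : bids) i x : i \notin T ->
  rs_t v B T (setb b i x) = rs_t v B T b.
Proof.
move=> iT; rewrite /rs_t /opt_val; congr (_ / _); apply: eq_bigl => S.
case sST: (S \subset T) => //=; rewrite cost_setb.
by case: ifP => iS; [move: (subsetP sST i iS); rewrite (negbTE iT)|rewrite addr0].
Qed.

Lemma Sstar_lower (T : {set agent}) (b : bids) i x :
  i \in rs_Sstar v B T b -> x <= b i ->
  rs_Sstar v B T (setb b i x) = rs_Sstar v B T b.
Proof.
move=> iS xle.
have iT : i \notin T.
  by have [/subsetP h _] := Sstar_props T b; move: (h i iS); rewrite inE.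
rewrite /rs_Sstar (rs_t_setb _ _ _ _ iT).
apply: (@argmax_stable _ _ _ _ _ _ (fun S : {set agent} => i \in S) (rs_t v B T b * (b i - x))).
- by rewrite finset.sub0set.
- by rewrite mulr_ge0 ?rs_t_ge0 // subr_ge0.
- move=> S; rewrite cost_setb; case: ifP => _; lra.
- exact: iS.
Qed.

Lemma Sstar_eq (T : {set agent}) (b : bids) i x y :
  i \in rs_Sstar v B T (setb b i x) -> i \in rs_Sstar v B T (setb b i y) ->
  rs_Sstar v B T (setb b i x) = rs_Sstar v B T (setb b i y).
Proof.
wlog xy : x y / x <= y.
  move=> h hx hy; case: (lerP x y) => [xy|/ltW yx]; first exact: h.
  by symmetry; apply: h.
move=> _ hy; rewrite -(@Sstar_lower _ _ _ x hy); first by rewrite setbK.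
by rewrite setb_same.
Qed.

End Sstar.

Section Mech.
Variables (R : realType) (n : nat).
Local Notation agent := 'I_n.
Local Notation bids := (agent -> R).
Variables (B : R) (M : mech R n).
Hypothesis hvo : valid_outcomes B M.
Hypothesis htr : truthful B M.

Lemma valid_setb (b : bids) i x : valid_bids B b -> 0 <= x <= B ->
  valid_bids B (setb b i x).
Proof. by move=> hb hx j; rewrite /setb; case: eqP. Qed.

Lemma mech_pay_ge (b : bids) i x : valid_bids B b -> i \in (M b).1 ->
  0 <= x <= B -> i \in (M (setb b i x)).1 -> x <= (M b).2 i.
Proof.
move=> hb ib hx ix.
have := htr (setb b i x) i (b i) (valid_setb _ i _ hb hx) (hb i).
rewrite setbK setb_id /utility ib ix.
have [_ h] := hvo _ (valid_setb _ i _ hb hx) i; move: (h ix); rewrite setb_same.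
lra.
Qed.

Lemma mech_mono (b : bids) i y : valid_bids B b -> i \in (M b).1 ->
  0 <= y <= b i -> i \in (M (setb b i y)).1.
Proof.
move=> hb ib /andP[y0 yb]; apply/negPn/negP => iy.
have yB : 0 <= y <= B by rewrite y0 /= (le_trans yb) //; case/andP: (hb i).
have := htr b i y hb yB; rewrite /utility ib (negbTE iy).
have [_ h] := hvo _ hb i; move: (h ib).
case: (ltrP y (b i)) => [ylt|byle] hp.
  lra.
have ye : y = b i by apply/eqP; rewrite eq_le yb.
by move: iy; rewrite ye setb_id ib.
Qed.

Lemma mech_pay_ge0 (b : bids) i : valid_bids B b -> 0 <= (M b).2 i.
Proof.
move=> hb; have [h1 h2] := hvo _ hb i.
case: (boolP (i \in (M b).1)) => ib; last by rewrite h1.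
by apply: le_trans (h2 ib); case/andP: (hb i).
Qed.

End Mech.

Lemma restrict_valid (R : realType) n (B : R) (S : {set 'I_n}) b :
  0 <= B -> valid_bids B b -> valid_bids B (restrict S b).
Proof. by move=> B0 hb i; rewrite /restrict; case: ifP => // _; rewrite lexx. Qed.

Lemma restrict_setb (R : realType) n (S : {set 'I_n}) (b : 'I_n -> R) i x :
  i \in S -> restrict S (setb b i x) = setb (restrict S b) i x.
Proof.
move=> iS; apply: funext => j; rewrite /restrict /setb.
by case: eqP => [->|_]; rewrite ?iS.
Qed.

Set Implicit Arguments.
Section RS.
Variables (R : realType) (n : nat).
Local Notation agent := 'I_n.
Local Notation bids := (agent -> R).
Variables (Om : finType) (w : Om -> R) (AddM : addm_type R n Om).
Variables (v : {set agent} -> R) (m : nat) (fs : 'I_m -> agent -> R) (B : R).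
Hypothesis hv : xos_rep v fs.
Hypothesis B0 : 0 < B.
Hypothesis hA : AddM_spec w AddM.
Variables (T : {set agent}) (o : Om).
Hypothesis wo : 0 < w o.

Let AM (S : {set agent}) := AddM o S (rs_f v fs S) B.
Let Ss (b : bids) := rs_Sstar v B T b.
Let W := rs_winners AddM v fs B T o.

Lemma AM_props (S : {set agent}) :
  [/\ forall b, valid_bids B b -> (AM S b).1 \subset S,
      valid_outcomes B (AM S), truthful B (AM S) & budget_feasible B (AM S)].
Proof.
case: hA => _ /(_ S (rs_f v fs S) B B0 (@rs_f_ge0 _ _ _ _ _ hv S)) [h1 [_ h2] h3 _].
by have [h4 h5] := h2 o wo; split => //; [exact: h1|exact: h3].
Qed.

Lemma W_def (b : bids) : W b = (AM (Ss b) (restrict (Ss b) b)).1.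
Proof. by []. Qed.

Lemma W_sub (b : bids) : valid_bids B b -> W b \subset Ss b.
Proof.
move=> hb; have [h _ _ _] := AM_props (Ss b); rewrite W_def; apply: h.
by apply: restrict_valid => //; apply: ltW.
Qed.

Lemma W_mono (b : bids) i y : valid_bids B b -> i \in W b -> 0 <= y <= b i ->
  i \in W (setb b i y).
Proof.
move=> hb iW /andP[y0 yb].
have iS : i \in Ss b := subsetP (W_sub hb) i iW.
rewrite W_def /Ss (@Sstar_lower _ _ v B B0 T b i y iS yb) -/(Ss b) restrict_setb //.
have [_ hvo htr _] := AM_props (Ss b).
apply: (@mech_mono _ _ _ _ hvo htr) => //.
  by apply: restrict_valid => //; apply: ltW.
by rewrite /restrict iS y0.
Qed.

Lemma W_pay (b : bids) i x : valid_bids B b -> i \in W b -> 0 <= x <= B ->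
  i \in W (setb b i x) -> x <= (AM (Ss b) (restrict (Ss b) b)).2 i.
Proof.
move=> hb iW hx ix.
have iS : i \in Ss b := subsetP (W_sub hb) i iW.
have ixS : i \in Ss (setb b i x) := subsetP (W_sub (@valid_setb _ _ _ _ i _ hb hx)) i ix.
have eS : Ss (setb b i x) = Ss b.
  by rewrite /Ss (@Sstar_eq _ _ v B B0 T b i x (b i)) ?setb_id.
move: ix; rewrite W_def eS restrict_setb // => ix.
have [_ hvo htr _] := AM_props (Ss b).
apply: (@mech_pay_ge _ _ _ _ hvo htr) => //.
by apply: restrict_valid => //; apply: ltW.
Qed.


Lemma thr_in (b : bids) i x : valid_bids B b -> 0 <= x <= B ->
  i \in W (setb b i x) -> x <= threshold B W b i.
Proof.
move=> hb hx ix; rewrite /threshold; apply: ub_le_sup; last by split.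
by exists B => y [/andP[_ ->]].
Qed.

Lemma thr_le (b : bids) i : valid_bids B b -> i \in W b ->
  threshold B W b i <= (AM (Ss b) (restrict (Ss b) b)).2 i.
Proof.
move=> hb iW; rewrite /threshold; apply: ge_sup.
  by exists (b i); split; [exact: hb|rewrite setb_id].
by move=> y [hy iy]; apply: W_pay.
Qed.

Lemma thr_gt (b : bids) i ci : valid_bids B b -> i \in W b -> 0 <= ci ->
  ci < threshold B W b i -> i \in W (setb b i ci).
Proof.
move=> hb iW c0; rewrite /threshold => /sup_gt [].
  by exists (b i); split; [exact: hb|rewrite setb_id].
move=> x [hx ix] cx.
have := @W_mono (setb b i x) i ci (@valid_setb _ _ _ _ i _ hb hx) ix.
by rewrite setbK setb_same c0 ltW //; apply.
Qed.

Lemma thr_setb (b : bids) i c : threshold B W (setb b i c) i = threshold B W b i.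
Proof. by rewrite /threshold /classical_sets.mkset; congr sup; apply: funext => x; rewrite setbK. Qed.


Lemma rs_valid : valid_outcomes B (xos_random_sample AddM v fs B T o).
Proof.
move=> b hb i /=; split => [/negbTE -> //|iW]; rewrite iW.
apply: thr_in => //; last by rewrite setb_id.
Qed.

Lemma rs_truthful : truthful B (xos_random_sample AddM v fs B T o).
Proof.
move=> b i ci hb hc; rewrite /utility /= -/W thr_setb.
case: (boolP (i \in W b)) => iW; case: (boolP (i \in W (setb b i ci))) => ic.
- by [].
- case: (lerP (threshold B W b i) ci) => h; first by lra.
  by move: ic; rewrite (@thr_gt b i ci hb iW _ h) //; case/andP: hc.
- by rewrite subr_ge0; apply: thr_in.
- by [].
Qed.

Lemma rs_bf : budget_feasible B (xos_random_sample AddM v fs B T o).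
Proof.
move=> b hb /=; rewrite -/W.
have [_ hvo _ hbf] := AM_props (Ss b).
have hr : valid_bids B (restrict (Ss b) b) by apply: restrict_valid => //; apply: ltW.
apply: le_trans (hbf _ hr); apply: ler_sum => i _.
case: ifP => iW; first exact: thr_le.
exact: (@mech_pay_ge0 _ _ _ _ hvo).
Qed.

End RS.

Section Cheb.
Variables (R : realType) (n : nat).
Local Notation agent := 'I_n.

Lemma card_sets : #|{set agent}| = (2 ^ n)%N.
Proof. by rewrite -cardsT -powersetT card_powerset cardsT card_ord. Qed.

Definition ee (T : {set agent}) (i : agent) : R := if i \in T then 1 else -1.

Definition tog (j : agent) (T : {set agent}) : {set agent} :=
  if j \in T then T :\ j else j |: T.

Lemma in_tog j T i : (i \in tog j T) = (if i == j then j \notin T else i \in T).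
Proof.
rewrite /tog; case: (boolP (j \in T)) => jT; rewrite !inE;
  case: eqP => [->|] //=; by rewrite ?jT.
Qed.

Lemma togK j : involutive (tog j).
Proof.
move=> T; apply/setP => i; rewrite !in_tog; case: eqP => [->|//].
by rewrite eqxx negbK.
Qed.

Lemma sum_ee (i j : agent) :
  \sum_(T : {set agent}) ee T i * ee T j = if i == j then (2 ^+ n : R) else 0.
Proof.
case: eqP => [->|ij].
  rewrite (eq_bigr (fun _ => 1)); last by move=> T _; rewrite /ee; case: ifP => _; rewrite ?mulr1 ?mulrNN ?mulr1.
  by rewrite sumr_const card_sets natrX.
set s := \sum_T _.
have : s = - s.
  rewrite /s {1}(reindex_inj (can_inj (togK j))) /= -sumrN; apply: eq_bigr => T _.
  rewrite /ee !in_tog eqxx; move/eqP/negbTE: ij => -> /=.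
  case: (j \in T); case: (i \in T) => /=.
  all: lra.
Qed.

Lemma cheb (a : agent -> R) :
  \sum_(T : {set agent}) (\sum_(i in T) a i - (\sum_i a i) / 2) ^+ 2
  = 2 ^+ n / 4 * \sum_i a i ^+ 2.
Proof.
have hT (T : {set agent}) : \sum_(i in T) a i - (\sum_i a i) / 2 = \sum_i a i * ee T i / 2.
  rewrite big_mkcond /= mulr_suml -sumrB; apply: eq_bigr => i _.
  rewrite /ee; case: ifP => _; lra.
under eq_bigr => T _ do rewrite hT expr2 mulr_suml.
under eq_bigr => T _ do under eq_bigr => i _ do rewrite mulr_sumr.
rewrite exchange_big /=.
under eq_bigr => i _ do rewrite exchange_big /=.
rewrite mulr_sumr; apply: eq_bigr => i _.
rewrite (bigD1 i) //= [X in _ + X]big1; last first.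
  move=> j ji.
  rewrite (eq_bigr (fun T => a i * a j / 4 * (ee T i * ee T j))); last by move=> T _; rewrite /=; lra.
  rewrite -mulr_sumr sum_ee; case: eqP => [e|_]; last by rewrite mulr0.
  by move: ji; rewrite e eqxx.
rewrite (eq_bigr (fun T => a i * a i / 4 * (ee T i * ee T i))); last by move=> T _; lra.
rewrite -mulr_sumr sum_ee eqxx addr0; lra.
Qed.

End Cheb.

Section Half.
Variables (R : realType) (n : nat) (B : R) (c : 'I_n -> R).
Hypothesis B0 : 0 < B.
Hypothesis hc : forall i, 0 <= c i <= B.

Lemma subset_half (S : {set 'I_n}) : B / 2 <= cost c S ->
  exists G : {set 'I_n}, [/\ G \subset S, B / 2 <= cost c G & cost c G <= B].
Proof.
move: {2}#|S| (leqnn #|S|) => k; elim: k S => [|k IH] S hk hS;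
  (case: (lerP (cost c S) B) => hB; first by exists S).
  have S0 : S = set0 by apply/eqP; rewrite -cards_eq0 -leqn0.
  by move: hB; rewrite S0 /cost big_set0 => h; move: (lt_trans B0 h); rewrite ltxx.
have : exists j, j \in S.
  by apply/set0Pn/negP => /eqP S0; move: hB; rewrite S0 /cost big_set0 => h; move: (lt_trans B0 h); rewrite ltxx.
case=> j jS.
case: (lerP (B / 2) (c j)) => hj.
  exists [set j]; rewrite sub1set jS /cost big_set1 hj /=; by case/andP: (hc j).
have hk' : (#|S :\ j| <= k)%N by move: hk; rewrite (cardsD1 j S) jS.
have hS' : B / 2 <= cost c (S :\ j).
  move: hB; rewrite /cost (big_setD1 j jS) /=; lra.
have [G [h1 h2 h3]] := IH _ hk' hS'.
exists G; split => //; apply: subset_trans h1 _; exact: subD1set.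
Qed.

End Half.

Section PerT.
Variables (R : realType) (n : nat).
Local Notation agent := 'I_n.
Variables (Om : finType) (w : Om -> R) (AddM : addm_type R n Om).
Variables (v : {set agent} -> R) (m : nat) (fs : 'I_m -> agent -> R) (B : R).
Hypothesis hv : xos_rep v fs.
Hypothesis B0 : 0 < B.
Hypothesis hA : AddM_spec w AddM.
Variable c : agent -> R.
Hypothesis hc : forall i, 0 <= c i <= B.
Variable a : agent -> R.
Hypothesis ha0 : forall i, 0 <= a i.
Hypothesis haO : forall U : {set agent}, exists U' : {set agent},
  [/\ U' \subset U, cost c U' <= B & \sum_(i in U) a i <= v U'].
Hypothesis hVT : forall T : {set agent}, opt_val v T c B <= \sum_i a i.

Lemma cost_restrict (S G : {set agent}) : G \subset S -> cost (restrict S c) G = cost c G.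
Proof. by move=> sGS; apply: eq_bigr => i iG; rewrite /restrict (subsetP sGS i iG). Qed.

Lemma sum_compl (T : {set agent}) :
  \sum_(i in ~: T) a i = \sum_i a i - \sum_(i in T) a i.
Proof.
rewrite [X in _ = X - _](bigID (fun i => i \in T)) /=.
have -> : \sum_(i in ~: T) a i = \sum_(i | i \notin T) a i by apply: eq_bigl => i; rewrite inE.
lra.
Qed.

Lemma perT (T : {set agent}) :
  (\sum_i a i) / 4 <= \sum_(i in T) a i <= 3 * (\sum_i a i) / 4 ->
  (\sum_i a i) / 192 <= \sum_(o : Om) w o * v (rs_winners AddM v fs B T o c).
Proof.
set V := \sum_i a i; set X := \sum_(i in T) a i => /andP[hX1 hX2].
set S := rs_Sstar v B T c; set f := rs_f v fs S; set t := rs_t v B T c.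
set VT := opt_val v T c B.
have hc0 : forall i, 0 <= c i by move=> i; case/andP: (hc i).
have hXVT : X <= VT.
  have [U' [h1 h2 h3]] := haO T; apply: le_trans h3 _; exact: opt_val_ge.
have hVTV : VT <= V := hVT T.
have htB : t * B = VT / 8.
  by rewrite /t /rs_t -/VT; field; rewrite gt_eqF.
have ht0 : 0 <= t by apply: rs_t_ge0.
have [hSsub hSopt] := @Sstar_props _ _ v B T c.
move: hSopt; rewrite -/t -/S => hSopt.
have [U' [h1 h2 h3]] := haO (~: T).
rewrite sum_compl -/V -/X in h3.
set optf := opt_val (fun U => \sum_(i in U) f i) S (restrict S c) B.
have hfS : \sum_(i in S) f i = v S := @rs_f_tight _ _ _ _ _ hv S.
have hopt : V / 64 <= optf.
  case: (lerP (cost c S) B) => hcS.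
    have sSS : S \subset S by apply/subsetP.
    apply: le_trans (@opt_val_ge _ _ (fun U => \sum_(i in U) f i) S (restrict S c) B S sSS _); last first.
      by rewrite cost_restrict // ltW.
    rewrite hfS.
    have := hSopt U' h1.
    have : 0 <= t * cost c S by rewrite mulr_ge0 // cost_ge0.
    have : t * cost c U' <= t * B by rewrite ler_wpM2l.
    move=> q1 q2 q3; lra.
  have hh : B / 2 <= cost c S. have B0p : 0 < B by exact: B0. lra.
  have [G [hGS hG1 hG2]] := @subset_half _ _ B c B0 hc S hh.
  apply: le_trans (@opt_val_ge _ _ (fun U => \sum_(i in U) f i) S (restrict S c) B G hGS _); last first.
    by rewrite cost_restrict.
  have hSG := hSopt (S :\: G) (subset_trans (subsetDl S G) hSsub).
  have hf1 : \sum_(i in S :\: G) f i <= v (S :\: G) := @rs_f_le _ _ _ _ _ hv S (S :\: G).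
  have hsplit := @sum_split _ _ f S G hGS.
  have hcs := @cost_split _ _ c S G hGS.
  have hm : t * cost c S = t * cost c G + t * cost c (S :\: G) by rewrite hcs mulrDr.
  have : t * (B / 2) <= t * cost c G by rewrite ler_wpM2l.
  move=> q1 /=; lra.
have hw0 : forall o, 0 <= w o by case: hA => [[h _] _]; exact: h.
have hf0 : forall i, 0 <= f i := @rs_f_ge0 _ _ _ _ _ hv S.
case: hA => _ /(_ S f B B0 hf0) [_ _ _ /(_ (restrict S c))] happ.
have hr : forall i, 0 <= restrict S c i <= B.
  by move=> i; rewrite /restrict; case: ifP => _; [exact: hc|rewrite lexx (ltW B0)].
have := happ hr; rewrite -/optf /expected_value => h.
have : \sum_o w o * \sum_(i in (AddM o S f B (restrict S c)).1) f i <=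
       \sum_o w o * v (rs_winners AddM v fs B T o c).
  apply: ler_sum => o _; apply: ler_wpM2l => //; exact: rs_f_le.
lra.
Qed.

End PerT.

Section Final.
Variables (R : realType) (n : nat) (Om : finType).

Lemma sum3 (F : bool * ({set 'I_n} * Om) -> R) :
  \sum_s F s = \sum_(b : bool) \sum_(T : {set 'I_n}) \sum_(o : Om) F (b, (T, o)).
Proof.
rewrite (eq_bigr (fun s => F (s.1, (s.2.1, s.2.2)))); last by move=> [? [? ?]].
rewrite -(pair_bigA _ (fun b q => F (b, (q.1, q.2)))); apply: eq_bigr => b _.
by rewrite -(pair_bigA _ (fun T o => F (b, (T, o)))).
Qed.

Lemma sumT_const (x : R) : \sum_(T : {set 'I_n}) x = 2 ^+ n * x.
Proof. by rewrite sumr_const (_ : #|_| = 2 ^ n)%N ?card_sets // -[in LHS]mulr_natl natrX. Qed.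

Lemma mw_pos (w : Om -> R) (s : bool * ({set 'I_n} * Om)) : 0 < main_weight w s -> 0 < w s.2.2.
Proof.
rewrite /main_weight => h; rewrite ltNge; apply/negP => hle; move: h.
rewrite ltNge; apply/negP/negPn.
rewrite mulr_ge0_le0 //; first by rewrite invr_ge0.
by rewrite mulr_ge0_le0 // invr_ge0 exprn_ge0.
Qed.

Variables (v : {set 'I_n} -> R) (B : R).

Lemma mi_bf : 0 <= B -> budget_feasible B (max_item_mech v B).
Proof.
move=> B0 b _ /=; rewrite -big_mkcond /max_item_set; case: pickP => [i _|_] /=.
  by rewrite big_set1.
by rewrite big_set0.
Qed.

Lemma mi_valid : valid_outcomes B (max_item_mech v B).
Proof.
move=> b hb i /=; split; first by move/negbTE => ->.
by move=> ->; case/andP: (hb i).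
Qed.

Lemma mi_truthful : truthful B (max_item_mech v B).
Proof. by move=> b i ci _ _; rewrite /utility /=. Qed.

Lemma mi_val (i : 'I_n) : v [set i] <= v (max_item_set v).
Proof.
rewrite /max_item_set; case: pickP => [j /forallP h|h] /=; first exact: h.
have [_ hk] := @argmax_props _ _ i xpredT (fun k => v [set k]) isT.
move: (h (Order.arg_max i xpredT (fun k => v [set k]))) => /negbT/negP; case.
by apply/forallP => j; apply: hk.
Qed.

End Final.
Lemma approx (R : realType) (n : nat) (B : R)
    (v : {set 'I_n} -> R) (m : nat) (fs : 'I_m -> 'I_n -> R)
    (Om : finType) (w : Om -> R) (AddM : addm_type R n Om)
    (B0 : 0 < B) (hv : xos_rep v fs) (hA : AddM_spec w AddM)
    (c : 'I_n -> R) (hc : forall i, 0 <= c i <= B) :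
  opt_val v [set: 'I_n]%SET c B
     <= 768%:R * expected_value (main_weight w) (xos_main AddM v fs B) v c.
Proof.
have hw0 : forall o, 0 <= w o by case: hA => [[h _] _]; exact: h.
have hw1 : \sum_o w o = 1 by case: hA => [[_ h] _]; exact: h.
have hc0 : forall i, 0 <= c i by move=> i; case/andP: (hc i).
have vge0 := @v_ge0 _ _ _ _ _ hv.
have vgef := @v_ge_f _ _ _ _ _ hv.
set P : R := 2 ^+ n.
have P0 : 0 < P by rewrite /P exprn_gt0.
set g := fun T => \sum_o w o * v (rs_winners AddM v fs B T o c).
have g0 : forall T, 0 <= g T.
  by move=> T; apply: sumr_ge0 => o _; rewrite mulr_ge0...
set Etrue := 2^-1 * P^-1 * \sum_T g T.
set Efalse := 2^-1 * v (max_item_set v).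
have Edec : expected_value (main_weight w) (xos_main AddM v fs B) v c = Etrue + Efalse.
  rewrite /expected_value sum3 big_bool /=; congr (_ + _).
    rewrite /Etrue /g mulr_sumr; apply: eq_bigr => T _; rewrite mulr_sumr.
    by apply: eq_bigr => o _; rewrite /main_weight /= -/P; ring.
  have h1 : forall T : {set 'I_n}, \sum_o main_weight w (false, (T, o)) * v (xos_main AddM v fs B (false, (T, o)) c).1
      = 2^-1 * P^-1 * v (max_item_set v).
    move=> T; rewrite (eq_bigr (fun o => (2^-1 * P^-1 * v (max_item_set v)) * w o)).
      by rewrite -mulr_sumr hw1 mulr1.
    by move=> o _; rewrite /main_weight /= -/P; ring.
  rewrite (eq_bigr _ (fun T _ => h1 T)) sumT_const -/P /Efalse; field.
  by rewrite gt_eqF.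
rewrite Edec.
have Et0 : 0 <= Etrue.
  apply: mulr_ge0; last by apply: sumr_ge0 => T _; exact: g0.
  by rewrite mulr_ge0 // invr_ge0 ltW.
have Ef0 : 0 <= Efalse by apply: mulr_ge0; [rewrite invr_ge0|exact: vge0].
set V := opt_val v [set: 'I_n]%SET c B.
have V0 : 0 <= V by apply: opt_val_ge0.
case: (opt_val_cases _ _ v [set: 'I_n]%SET c B) => [h0|[O [_ hO hVO]]].
  by rewrite -/V in h0; lra.
rewrite -/V in hVO.
case: (@v_cases _ _ _ _ _ hv O) => [hO0|[j hj]]; first by lra.
set a := fun i => if i \in O then fs j i else 0.
have ha0 : forall i, 0 <= a i.
  by move=> i; rewrite /a; case: ifP => // _; case: hv => h _; exact: h.
have hVa : V = \sum_i a i by rewrite hVO hj big_mkcond.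
have haO : forall U : {set 'I_n}, exists U' : {set 'I_n},
    [/\ U' \subset U, cost c U' <= B & \sum_(i in U) a i <= v U'].
  move=> U; exists (U :&: O); split.
  - exact: subsetIl.
  - by apply: le_trans hO; apply: cost_sub => //; exact: subsetIr.
  - rewrite (big_setID O) /= [X in _ + X]big1; last first.
      by move=> i; rewrite !inE /a => /andP[/negbTE -> _].
    rewrite addr0 (eq_bigr (fs j)); first exact: vgef.
    by move=> i; rewrite !inE /a => /andP[_ ->].
have hVT : forall T : {set 'I_n}, opt_val v T c B <= \sum_i a i.
  move=> T; rewrite -hVa; apply: opt_val_le => // S _ hS.
  by apply: opt_val_ge => //; exact: subsetT.
case: (boolP [exists i, V / 8 < a i]) => [/existsP [i hi]|/existsPn hall].
  have hai : a i <= v [set i].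
    rewrite /a; case: ifP => _; last exact: vge0.
    by have := vgef j [set i]; rewrite big_set1.
  have := @mi_val _ _ v i; rewrite -/Efalse /Efalse => hmi.
  lra.
have hall' : forall i, a i <= V / 8 by move=> i; rewrite leNgt; apply: hall.
set Va := \sum_i a i in hVa hVT *.
have Vpos : 0 < V \/ V = 0 by case: (ltrP 0 V) => h; [left|right; apply/eqP; rewrite eq_le h V0].
case: Vpos => [Vpos|V00]; last by lra.
set k := (12 * V)^-1.
have k0 : 0 <= k by rewrite /k invr_ge0; lra.
have hg : forall T : {set 'I_n},
    V / 192 - k * (\sum_(i in T) a i - Va / 2) ^+ 2 <= g T.
  move=> T; set X := \sum_(i in T) a i.
  have sq0 : 0 <= k * (X - Va / 2) ^+ 2 by rewrite mulr_ge0 // sqr_ge0.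
  case: (boolP (Va / 4 <= X <= 3 * Va / 4)) => hX.
    have := @perT _ _ _ _ _ _ _ _ B hv B0 hA c hc a haO hVT T hX.
    rewrite -/Va /g => hp; lra.
  have hsq : V ^+ 2 / 16 <= (X - Va / 2) ^+ 2.
    move: hX; rewrite negb_and -!ltNge => /orP [] h; rewrite -hVa in h *; nra.
  have : k * (V ^+ 2 / 16) <= k * (X - Va / 2) ^+ 2 by rewrite ler_wpM2l.
  have -> : k * (V ^+ 2 / 16) = V / 192 by rewrite /k; field; rewrite gt_eqF.
  have := g0 T; lra.
have hsum : \sum_(T : {set 'I_n}) (V / 192 - k * (\sum_(i in T) a i - Va / 2) ^+ 2) <= \sum_T g T.
  by apply: ler_sum => T _; exact: hg.
rewrite sumrB sumT_const -/P -mulr_sumr cheb -/Va -/P in hsum.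
have hsa : \sum_i a i ^+ 2 <= V / 8 * Va.
  rewrite mulr_sumr; apply: ler_sum => i _; rewrite expr2.
  by apply: ler_wpM2r => //; apply: hall'.
have hP4 : 0 <= P / 4 by rewrite divr_ge0 // ltW.
have h2 := ler_wpM2l k0 (ler_wpM2l hP4 hsa).
have e2 : k * (P / 4 * (V / 8 * Va)) = P * (V / 384).
  by rewrite -hVa /k; field; rewrite gt_eqF.
rewrite e2 in h2.
have hG : P * (V / 384) <= \sum_T g T by lra.
have : 2^-1 * P^-1 * (P * (V / 384)) <= Etrue.
  by rewrite /Etrue ler_wpM2l // mulr_ge0 // invr_ge0 ltW.
have -> : 2^-1 * P^-1 * (P * (V / 384)) = V / 768 by field; rewrite gt_eqF.
lra.
Qed.

Theorem theorem3p1 :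
  exists C : nat, forall (R : realType) (n : nat) (B : R)
    (v : {set 'I_n} -> R) (m : nat) (fs : 'I_m -> 'I_n -> R)
    (Om : finType) (w : Om -> R) (AddM : addm_type R n Om),
    0 < B -> xos_rep v fs -> AddM_spec w AddM ->
    [/\ univ_budget_feasible B (main_weight w) (xos_main AddM v fs B),
        univ_truthful B (main_weight w) (xos_main AddM v fs B) &
        forall c : 'I_n -> R, (forall i, 0 <= c i <= B) ->
          opt_val v [set: 'I_n]%SET c B
            <= C%:R * expected_value (main_weight w) (xos_main AddM v fs B) v c].
Proof.
exists 768%N => R n B v m fs Om w AddM B0 hv hA; split.
- move=> [[] [T o]] /mw_pos /= wo.
    exact: (rs_bf hv B0 hA T o wo).
  exact: mi_bf (ltW B0).
- split.
    have hw0 : forall o, 0 <= w o by case: hA => [[h _] _]; exact: h.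
    have hw1 : \sum_o w o = 1 by case: hA => [[_ h] _]; exact: h.
    split.
      move=> s; rewrite /main_weight; apply: mulr_ge0; first by rewrite invr_ge0.
      by apply: mulr_ge0; [rewrite invr_ge0 exprn_ge0|exact: hw0].
    rewrite sum3 big_bool /=.
    have h1 : forall b, \sum_(T : {set 'I_n}) \sum_o main_weight w (b, (T, o)) = 2^-1.
      move=> b; rewrite (eq_bigr (fun _ => 2^-1 * (2 ^+ n)^-1)).
        rewrite sumT_const; field; by rewrite expf_neq0 // pnatr_eq0.
      move=> T _; rewrite /main_weight /= -mulr_sumr -mulr_sumr hw1; ring.
    by rewrite !h1; field.
  move=> [[] [T o]] /mw_pos /= wo.
    split; [exact: rs_valid|exact: (rs_truthful hv B0 hA T o wo)].
  by split; [exact: mi_valid|exact: mi_truthful].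
- move=> c hc; exact: approx.
Qed.
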